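(* Consider the $k$-agent prophet game with random tie-breaking. For every $\ell\in\{1,\ldots,n\}$, let $$T^\ell=\frac{1}{k+\ell}\sum_{j=1}^{\ell}\mathbb{E}[y_j].$$ Then for every agent $i$, the single threshold strategy $T^\ell$ guarantees agent $i$ an expected utility of at least $T^\ell$; that is, for every strategy profile $S_{-i}$ of the other agents, $u_i(T^\ell,S_{-i})\ge T^\ell$.
   Context: Prophet game with competing agents: there are $n$ rewards $v_1,\ldots,v_n$, where $v_t$ is a non-negative real random variable drawn from a known distribution $F_t$ (with finite mean), independently across $t$. There are $k$ agents. At each time $t=1,\ldots,n$, the value $v_t$ is revealed to all agents, and every active agent (an agent who has not yet received a reward) decides whether to select $v_t$. If exactly one agent selects $v_t$, it is assigned to that agent. If several agents select it, it is assigned to one of them by the tie-breaking rule. Under random tie-breaking, the reward goes to a uniformly random agent among those selecting it. An agent who receives a reward becomes inactive, and unselected rewards are lost forever. A strategy of an agent is a (possibly randomized) rule that, for each $t$, decides whether to select $v_t$ based on $t$, the realized value $v_t$, and the set of currently active agents. The utility $u_i(S)$ of agent $i$ under strategy profile $S=(S_1,\ldots,S_k)=(S_i,S_{-i})$ is her expected received reward (zero if she receives none). A strategy $S_i$ guarantees agent $i$ utility $\alpha$ if $u_i(S_i,S_{-i})\ge\alpha$ for every $S_{-i}$. The single threshold strategy $T$ selects $v_t$ if and only if the agent is still active and $v_t\ge T$. For $j=1,\ldots,n$, $y_j$ denotes the $j$-th largest value among $v_1,\ldots,v_n$. *)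

(* Defs.v *)
From HB Require Import structures.
From mathcomp Require Import all_boot all_order all_algebra.
From mathcomp Require Import all_classical all_reals all_analysis.
Set Implicit Arguments. Unset Strict Implicit. Unset Printing Implicit Defensive.
Import Order.TTheory GRing.Theory Num.Theory.
Local Open Scope ring_scope.

(* Time steps are indexed 0, ..., n-1 (paper: 1, ..., n).
   A (behavioral, possibly randomized) strategy gives, for each time t, each
   set A of currently active agents and each realized value v, the probability
   with which the agent selects v.  The agents' randomizations are independent. *)
Definition strategy (R : realType) (k : nat) := nat -> {set 'I_k} -> R -> R.

Definition valid_strategy (R : realType) (k : nat) (s : strategy R k) : Prop :=
  forall t A, measurable_fun setT (s t A) /\ forall v, 0 <= s t A v <= 1.

Definition thr_strategy (R : realType) (k : nat) (T : R) : strategy R k :=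
  fun _ _ v => if T <= v then 1 else 0.

Local Open Scope ereal_scope.

(* One round from the point of view of agent i, with active set A, value v,
   selection probabilities sig j of the agents, and continuation value
   W : {set 'I_k} -> \bar R (expected future utility of i given the next
   active set).  B is the (random) set of active agents that select v; the
   reward goes to a uniformly random member of B (random tie-breaking). *)
Definition round_value (R : realType) (k : nat) (i : 'I_k) (A : {set 'I_k})
    (sig : 'I_k -> R) (W : {set 'I_k} -> \bar R) (v : R) : \bar R :=
  \sum_(B : {set 'I_k} | B \subset A)
     (\prod_(j in A) (if j \in B then sig j else 1 - sig j))%R%:E *
     (if B == finset.set0 then W A
      else \sum_(j in B)
             ((#|B|%:R)^-1)%R%:E * (if j == i then v%:E else W (A :\ j))).

Fixpoint util_from (R : realType) (k : nat) (F : nat -> probability R R)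
    (S : 'I_k -> strategy R k) (i : 'I_k) (m t : nat) (A : {set 'I_k}) : \bar R :=
  match m with
  | 0 => 0
  | m'.+1 =>
      if i \in A then
        \int[F t]_v round_value i A (fun j => S j t A v)
                                    (util_from F S i m' t.+1) v
      else 0
  end.

Definition utility (R : realType) (k n : nat) (F : nat -> probability R R)
    (S : 'I_k -> strategy R k) (i : 'I_k) : \bar R :=
  util_from F S i n 0 [set: 'I_k].

(* Expectation of f(v_0,...,v_{m-1}) under independent v_t ~ Fs_t
   (iterated integral = integral w.r.t. the product measure). *)
Fixpoint iter_expect (R : realType) (Fs : seq (probability R R))
    (f : seq R -> \bar R) : \bar R :=
  match Fs with
  | [::] => f [::]
  | F0 :: Fs' => \int[F0]_x iter_expect Fs' (fun s => f (x :: s))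
  end.

Local Close Scope ereal_scope.

Definition jth_largest (R : realType) (j : nat) (vs : seq R) : R :=
  nth 0 (sort (fun x y : R => y <= x) vs) j.-1.

(* E[y_j] (a real number, finite under the finite mean assumption). *)
Definition E_y (R : realType) (n : nat) (F : nat -> probability R R) (j : nat) : R :=
  fine (iter_expect [seq F t | t <- iota 0 n] (fun vs => (jth_largest j vs)%:E)).

Definition T_ell (R : realType) (k n : nat) (F : nat -> probability R R) (l : nat) : R :=
  ((k + l)%:R)^-1 * \sum_(1 <= j < l.+1) E_y n F j.

(* Main.v *)
Require Import Defs.
From HB Require Import structures.
From mathcomp Require Import all_boot all_order all_algebra.
From mathcomp Require Import all_classical all_reals all_analysis.
From mathcomp Require Import lra.
Import Order.TTheory GRing.Theory Num.Theory.
Local Open Scope ring_scope.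
Local Open Scope classical_set_scope.
Set Implicit Arguments. Unset Strict Implicit.
Section ERS.
Local Open Scope ereal_scope.
Lemma sup_add_le (R : realType) (A B : set (\bar R)) (c : \bar R) :
  A 0 -> B 0 -> (forall a, A a -> 0 <= a) ->
  (forall a b, A a -> B b -> a + b <= c) ->
  ereal_sup A + ereal_sup B <= c.
Proof.
move=> A0 B0 Ag0 hab.
have c0 : 0 <= c by have := hab 0 0 A0 B0; rewrite adde0.
case: c c0 hab => [r| |] c0 hab; last 2 first.
- by rewrite leey.
- by move: c0; rewrite leeNy_eq.
have supB : ereal_sup B \is a fin_num.
  rewrite fin_numE; apply/andP; split.
    by rewrite gt_eqF// (lt_le_trans _ (ereal_sup_ubound B0)) ?ltNyr.
  rewrite lt_eqF// (le_lt_trans (y:=r%:E)) ?ltry//.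
  by apply: ge_ereal_sup => b Bb; have := hab 0 b A0 Bb; rewrite add0e.
rewrite -leeBrDr//; apply: ge_ereal_sup => a Aa.
have afin : a \is a fin_num.
  rewrite fin_numE; apply/andP; split.
    by rewrite gt_eqF// (lt_le_trans _ (Ag0 a Aa)) ?ltNyr.
  by rewrite lt_eqF// (le_lt_trans (y:=r%:E)) ?ltry// -(adde0 a) hab.
rewrite leeBrDr// addeC -leeBrDr//; apply: ge_ereal_sup => b Bb.
by rewrite leeBrDr// addeC hab.
Qed.

Section A.
Context (R : realType) (mu : {measure set R -> \bar R}).
Import HBNNSimple.

Lemma nn_le (f g : R -> \bar R) : (forall x, 0 <= f x) -> (forall x, f x <= g x) ->
  \int[mu]_x f x <= \int[mu]_x g x.
Proof.
move=> f0 fg.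
have g0 : forall x, 0 <= g x by move=> x; exact: le_trans (f0 x) (fg x).
rewrite !ge0_integralTE//; apply: ereal_sup_le => _ [h hf <-].
exists h => //= x; exact: le_trans (hf x) (fg x).
Qed.

Lemma int_le_any (f g : R -> \bar R) : (forall x, f x <= g x) ->
  \int[mu]_x f x <= \int[mu]_x g x.
Proof.
move=> fg; rewrite (integralE _ _ f) (integralE _ _ g); apply: leeB.
- apply: nn_le => x; first exact: funepos_ge0.
  by apply: (funepos_le (D:=setT)); rewrite ?inE // => y _; exact: fg.
- apply: nn_le => x; first exact: funeneg_ge0.
  by apply: (funeneg_le (D:=setT)); rewrite ?inE // => y _; exact: fg.
Qed.

Lemma nn_superadd (f g : R -> \bar R) : (forall x, 0 <= f x) -> (forall x, 0 <= g x) ->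
  \int[mu]_x f x + \int[mu]_x g x <= \int[mu]_x (f x + g x).
Proof.
move=> f0 g0.
rewrite !ge0_integralTE//; last by move=> x; rewrite adde_ge0.
apply: sup_add_le.
- by exists nnsfun0; [move=> x /=; rewrite f0|exact: sintegral0].
- by exists nnsfun0; [move=> x /=; rewrite g0|exact: sintegral0].
- by move=> _ [h _ <-]; exact: sintegral_ge0.
move=> _ _ [h1 h1f <-] [h2 h2g <-].
rewrite -sintegralD; apply: ereal_sup_ubound => /=.
exists (h1 \+ h2)%R => //= x.
by rewrite EFinD leeD.
Qed.
End A.

Section B.
Context (R : realType).

Lemma iter_le (Fs : seq (probability R R)) (f g : seq R -> \bar R) :
  (forall s, size s = size Fs -> f s <= g s) -> iter_expect Fs f <= iter_expect Fs g.
Proof.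
elim: Fs f g => [|F0 Fs IH] f g h /=; first exact: h.
apply: int_le_any => x; apply: IH => s hs; apply: h => /=; by rewrite hs.
Qed.

Lemma iter_ge0 (Fs : seq (probability R R)) (f : seq R -> \bar R) :
  (forall s, size s = size Fs -> 0 <= f s) -> 0 <= iter_expect Fs f.
Proof.
elim: Fs f => [|F0 Fs IH] f h /=; first exact: h.
apply: integral_ge0 => x _; apply: IH => s hs; apply: h => /=; by rewrite hs.
Qed.

Lemma iter_superadd (Fs : seq (probability R R)) (f g : seq R -> \bar R) :
  (forall s, size s = size Fs -> 0 <= f s) ->
  (forall s, size s = size Fs -> 0 <= g s) ->
  iter_expect Fs f + iter_expect Fs g <= iter_expect Fs (fun s => f s + g s).
Proof.
elim: Fs f g => [|F0 Fs IH] f g hf hg /=; first by [].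
have h1 : forall x, 0 <= iter_expect Fs (fun s => f (x :: s)).
  by move=> x; apply: iter_ge0 => s hs; apply: hf => /=; rewrite hs.
have h2 : forall x, 0 <= iter_expect Fs (fun s => g (x :: s)).
  by move=> x; apply: iter_ge0 => s hs; apply: hg => /=; rewrite hs.
apply: le_trans (nn_superadd F0 h1 h2) _.
apply: int_le_any => x; apply: IH => s hs.
- by apply: hf => /=; rewrite hs.
- by apply: hg => /=; rewrite hs.
Qed.

Lemma iter_sum_superadd (Fs : seq (probability R R)) (I : Type) (r : seq I)
    (f : I -> seq R -> \bar R) :
  (forall j s, size s = size Fs -> 0 <= f j s) ->
  \sum_(j <- r) iter_expect Fs (f j) <= iter_expect Fs (fun s => \sum_(j <- r) f j s).
Proof.
move=> h; elim: r => [|j r IH].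
  by rewrite big_nil; apply: iter_ge0 => s _; rewrite big_nil.
rewrite big_cons; apply: le_trans; first exact: (leeD2l _ IH).
apply: le_trans; first apply: iter_superadd => s hs.
- exact: h.
- by apply: sume_ge0 => j' _; exact: h.
by apply: iter_le => s hs; rewrite big_cons.
Qed.

Lemma iter_linear (F : nat -> probability R R) (phi : R -> R) (m t0 : nat) (c : R) :
  (forall t, (t0 <= t < t0 + m)%N -> (F t).-integrable setT (EFin \o phi)) ->
  iter_expect [seq F t | t <- iota t0 m] (fun s => (c + \sum_(x <- s) phi x)%R%:E)
  = (c + \sum_(t <- iota t0 m) fine (\int[F t]_x (phi x)%:E))%R%:E.
Proof.
elim: m t0 c => [|m IH] t0 c hint /=; first by rewrite !big_nil.
have -> : (fun x => iter_expect [seq F t | t <- iota t0.+1 m]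
                  (fun s => (c + \sum_(x0 <- x :: s) phi x0)%R%:E)) =
          (fun x => ((c + \sum_(t <- iota t0.+1 m) fine (\int[F t]_x (phi x)%:E)) + phi x)%R%:E).
  apply: funext => x.
  rewrite (_ : (fun s => (c + \sum_(x0 <- x :: s) phi x0)%R%:E) =
               (fun s => ((c + phi x) + \sum_(x0 <- s) phi x0)%R%:E)); last first.
    by apply: funext => s; rewrite big_cons addrA.
  rewrite IH; first by rewrite addrAC.
  move=> t /andP[h1 h2]; apply: hint; apply/andP; split.
    exact: ltnW. by rewrite addnS.
have i0 : (F t0).-integrable setT (EFin \o phi).
  by apply: hint; rewrite leqnn /= addnS ltnS leq_addr.
set K := (c + _)%R.
have hD := @integralD_EFin _ _ _ (F t0) setT measurableT (cst K) phi
   (finite_measure_integrable_cst _ _ measurableT) i0.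
rewrite /= in hD.
under eq_integral do rewrite EFinD.
rewrite hD integral_cst //.
rewrite (_ : Measure.sort _ [set: R] = 1) ?mule1; last exact: probability_setT.
rewrite -(fineK (integrable_fin_num _ i0)) //.
by rewrite big_cons -EFinD /K (addrC (fine _)) addrA.
Qed.
End B.

End ERS.
Section C.
Context (R : realType) (T : R).
Definition phi (x : R) : R := Num.max (Num.max x 0 - T) 0.

Lemma phi_ge0 x : 0 <= phi x.
Proof. by rewrite /phi le_max lexx orbT. Qed.

Lemma orderstat_bound (vs : seq R) (l : nat) : (l <= size vs)%N ->
  \sum_(1 <= j < l.+1) Num.max (jth_largest j vs) 0 <=
  l%:R * T + \sum_(x <- vs) phi x.
Proof.
move=> hl.
set srt := sort (fun x y : R => y <= x) vs.
have ssz : size srt = size vs by rewrite size_sort.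
rewrite big_add1 /= /jth_largest -/srt.
have -> : \sum_(x <- vs) phi x = \sum_(0 <= j < size srt) phi (nth 0 srt j).
  rewrite (perm_big srt); first by rewrite (big_nth 0).
  by rewrite perm_sym perm_sort.
rewrite ssz (@big_cat_nat _ _ _ l 0 (size vs)) //=.
apply: (@le_trans _ _ (\sum_(0 <= j < l) (T + phi (nth 0 srt j)))).
  apply: ler_sum => j _; rewrite /phi.
  by rewrite -lerBlDl le_max lexx.
rewrite big_split /= sumr_const_nat subn0 mulr_natl lerD2l lerDl.
by apply: sumr_ge0 => j _; exact: phi_ge0.
Qed.
End C.

Lemma prob_sum1 (R : realType) (k : nat) (A : {set 'I_k}) (s : 'I_k -> R) :
  \sum_(B : {set 'I_k} | B \subset A)
     \prod_(j in A) (if j \in B then s j else 1 - s j) = 1.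
Proof.
pose F j := if j \in A then s j else 0.
pose G j := if j \in A then 1 - s j else 1.
have := @bigA_distr R 0 1 *%R +%R _ F G.
rewrite big1; last first.
  move=> j _; rewrite /F /G; by case: (j \in A); [rewrite -[LHS]/(s j + (1 - s j))%R addrCA subrr addr0|rewrite -[LHS]/(0 + 1)%R add0r].
move=> /esym; rewrite (bigID (fun B : {set 'I_k} => B \subset A)) /=.
rewrite [X in _ + X]big1; last first.
  move=> B /subsetPn [j jB jA].
  rewrite (bigD1 j) //= jB /F (negbTE jA) mul0r //.
rewrite addr0 => h; apply: etrans h; apply: eq_big => // B BA.
rewrite [RHS](bigID (mem A)) /= [X in _ * X]big1 ?mulr1; last first.
  move=> j jA; have jB : j \notin B.
    by apply/negP => jB; have := fintype.subsetP BA j jB; rewrite (negbTE jA).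
  by rewrite (negbTE jB) /G (negbTE jA).
apply: eq_bigr => j jA.
by rewrite /F /G jA.
Qed.

Lemma inv_mul_card (R : realType) (b : nat) (M : R) : (0 < b)%N ->
  ((b%:R)^-1 * M) *+ b = M.
Proof.
move=> b0; rewrite -mulr_natr -mulrA (mulrC M) mulrA mulVf ?mul1r //.
by rewrite pnatr_eq0 -lt0n.
Qed.

Lemma round_bound (R : realType) (k : nat) (i : 'I_k) (A : {set 'I_k})
    (sig : 'I_k -> R) (W : {set 'I_k} -> \bar R) (v T M : R) :
  i \in A -> (forall j, 0 <= sig j <= 1) -> sig i = (if T <= v then 1 else 0) ->
  M <= T -> (forall A' : {set 'I_k}, i \in A' -> (M%:E <= W A')%E) ->
  ((M + Num.max (v - T) 0 / k%:R)%:E <= round_value i A sig W v)%E.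
Proof.
move=> iA s01 si MT hW.
have k0 : (0 < k)%N by apply: leq_ltn_trans (leq0n i) (ltn_ord i).
set g := (M + _)%R.
pose p (B : {set 'I_k}) := \prod_(j in A) (if j \in B then sig j else 1 - sig j).
have p0 : forall B : {set 'I_k}, 0 <= p B.
  move=> B; apply: prodr_ge0 => j _; case: ifP => _; have /andP[h0 h1] := s01 j.
    exact: h0.
  by rewrite subr_ge0.
have key : forall B : {set 'I_k}, B \subset A ->
  ((p B * g)%:E <= (p B)%:E *
     (if B == finset.set0 then W A
      else \sum_(j in B)
             ((#|B|%:R^-1)%:E * (if j == i then v%:E else W (A :\ j)))))%E.
  move=> B BA.
  have [pz|pnz] := eqVneq (p B) 0; first by rewrite pz mul0r mul0e.
  rewrite EFinM; apply: lee_wpmul2l; first by rewrite lee_fin p0.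
  have fi : (if i \in B then sig i else 1 - sig i) != 0.
    move: pnz; rewrite /p (bigD1 i) //=; apply: contra => /eqP ->.
    by rewrite mul0r.
  have [iB|iB] := boolP (i \in B).
  - have [hv|hv] := lerP T v; last first.
      by move: fi; rewrite iB si leNgt hv eqxx.
    have Bn0 : B != finset.set0 by apply/set0Pn; exists i.
    rewrite (negbTE Bn0).
    have b0 : (0 < #|B|)%N by rewrite card_gt0.
    have bk : (#|B| <= k)%N by have := max_card (mem B); rewrite card_ord.
    apply: (@le_trans _ _ (\sum_(j in B)
          ((#|B|%:R^-1 * (if j == i then v else M))%R)%:E)); last first.
      apply: lee_sum => j jB; rewrite EFinM; apply: lee_wpmul2l.
        by rewrite lee_fin invr_ge0 ler0n.
      case: eqP => [_|/eqP ji]; first exact: lexx.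
      by apply: hW; rewrite in_setD1 eq_sym ji iA.
    rewrite sumEFin lee_fin.
    have -> : \sum_(j in B) (#|B|%:R^-1 * (if j == i then v else M)) =
              M + #|B|%:R^-1 * (v - M).
      transitivity (\sum_(j in B) (#|B|%:R^-1 * M +
                      #|B|%:R^-1 * ((if j == i then v else M) - M))).
        by apply: eq_bigr => j _; rewrite -mulrDr addrC subrK.
      rewrite big_split /= sumr_const inv_mul_card //.
      rewrite (bigD1 i) //= eqxx big1 ?addr0 //.
      by move=> j /andP[_ /negbTE ->]; rewrite subrr mulr0.
    rewrite /g lerD2l.
    have vT : 0 <= v - T by rewrite subr_ge0.
    rewrite max_l // mulrC; apply: ler_pM => //.
    + by rewrite lef_pV2 ?posrE ?ltr0n ?ler_nat.
    + by rewrite lerD2l lerN2.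
  - have [hv|hv] := lerP T v.
      by move: fi; rewrite si hv (negbTE iB) subrr eqxx.
    have -> : g = M by rewrite /g max_r ?mul0r ?addr0 // subr_le0 ltW.
    have [B0|Bn0] := eqVneq B finset.set0; first exact: hW.
    idtac.
    have b0 : (0 < #|B|)%N by rewrite card_gt0.
    apply: (@le_trans _ _ (\sum_(j in B) ((#|B|%:R^-1 * M)%R)%:E)); last first.
      apply: lee_sum => j jB; rewrite EFinM; apply: lee_wpmul2l.
        by rewrite lee_fin invr_ge0 ler0n.
      have ji : j != i by apply: contraNneq iB => <-.
      by rewrite (negbTE ji); apply: hW; rewrite in_setD1 eq_sym ji iA.
    by rewrite sumEFin sumr_const inv_mul_card.
rewrite /round_value.
have -> : g = \sum_(B : {set 'I_k} | B \subset A) (p B * g).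
  by rewrite -mulr_suml /p prob_sum1 mul1r.
rewrite -sumEFin; apply: lee_sum => B BA; exact: key.
Qed.

Section E.
Context (R : realType).

Lemma integrable_bound (P : probability R R) (T : R) (h : R -> R) :
  P.-integrable setT (fun x => x%:E) -> measurable_fun setT h ->
  (forall x, `|h x| <= `|x| + `|T|) -> P.-integrable setT (EFin \o h).
Proof.
move=> iid mh hb.
have ig : P.-integrable setT (fun x => (`|x| + `|T|)%:E).
  apply: (@eq_integrable _ _ _ P setT measurableT ((abse \o (fun x => x%:E)) \+ (EFin \o cst `|T|)%R)%E) => //.
    apply: integrableD => //; first exact: integrable_abse.
    exact: finite_measure_integrable_cst.
apply: le_integrable ig => //.
  exact/measurable_realfun.measurable_EFinP.
move=> x _ /=; rewrite lee_fin (le_trans (hb x)) //.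
by rewrite [X in _ <= X]ger0_norm // addr_ge0.
Qed.

Lemma measurable_pospart (T : R) : measurable_fun setT (fun x : R => Num.max (x - T) 0).
Proof.
apply: (measurable_realfun.measurable_maxr (f := fun x : R => x - T) (g := cst 0)) => //.
apply: measurable_realfun.measurable_funB => //.
Qed.

Lemma measurable_phi (T : R) : measurable_fun setT (fun x : R => Num.max (Num.max x 0 - T) 0).
Proof.
apply: (measurable_realfun.measurable_maxr (f := fun x : R => Num.max x 0 - T) (g := cst 0)) => //.
apply: measurable_realfun.measurable_funB => //.
exact: (measurable_realfun.measurable_maxr (f := id) (g := cst 0)).
Qed.
End E.

Lemma game_ind (R : realType) (k n : nat) (F : nat -> probability R R) (T : R)
  (i : 'I_k) (S' : 'I_k -> strategy R k)
  (hS : forall j t A v, 0 <= S' j t A v <= 1)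
  (hSi : forall t A v, S' i t A v = if T <= v then 1 else 0)
  (hint : forall t, (t < n)%N -> (F t).-integrable setT (EFin \o (fun x => Num.max (x - T) 0))) :
  forall m t (A : {set 'I_k}), i \in A -> (t + m <= n)%N ->
   ((Num.min T ((k%:R)^-1 * \sum_(u < m) fine (\int[F (t + u)%N]_x (Num.max (x - T) 0)%:E)))%:E
      <= util_from F S' i m t A)%E.
Proof.
have k0 : (0 < k)%N by apply: leq_ltn_trans (leq0n i) (ltn_ord i).
elim=> [|m IH] t A iA htm /=.
  by rewrite big_ord0 mulr0 lee_fin ge_min lexx orbT.
rewrite iA.
set M := Num.min T ((k%:R)^-1 * \sum_(u < m) fine (\int[F (t.+1 + u)%N]_x (Num.max (x - T) 0)%:E)).
have hW : forall A' : {set 'I_k}, i \in A' -> (M%:E <= util_from F S' i m t.+1 A')%E.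
  by move=> A' iA'; apply: IH => //; rewrite addSnnS.
have ht : (t < n)%N by apply: leq_trans htm; rewrite -addn1 leq_add2l.
have i0 := hint t ht.
set e := fine (\int[F t]_x (Num.max (x - T) 0)%:E).
have e0 : 0 <= e by apply: fine_ge0; apply: integral_ge0 => x _; rewrite lee_fin le_max lexx orbT.
apply: (@le_trans _ _ (\int[F t]_v ((M + Num.max (v - T) 0 / k%:R)%:E))%E); last first.
  apply: int_le_any => v; apply: round_bound;
    [exact: iA | move=> j; exact: hS | exact: hSi | by rewrite ge_min lexx | exact: hW].
have i1 : (F t).-integrable setT (EFin \o (fun x => Num.max (x - T) 0 / k%:R)).
  apply: (eq_integrable measurableT _ _ _ (integrableZr measurableT (k%:R^-1) i0)).
  by move=> x _ /=; rewrite EFinM.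
have hD := @integralD_EFin _ _ _ (F t) setT measurableT (cst M) _
   (finite_measure_integrable_cst _ _ measurableT) i1.
rewrite /= in hD.
under eq_integral do rewrite EFinD.
rewrite hD integral_cst //.
rewrite (_ : Measure.sort _ [set: R] = 1%E) ?mule1; last exact: probability_setT.
under eq_integral do rewrite EFinM.
rewrite (integralZr measurableT i0) -(fineK (integrable_fin_num _ i0)) // -/e -EFinM -EFinD lee_fin.
rewrite big_ord_recl addn0.
under eq_bigr do rewrite lift0 addnS -addSn.
rewrite -/e.
set G := (k%:R^-1 * \sum_(i0 < m) fine (\int[F (t.+1 + i0)%N]_x (Num.max (x - T) 0)%:E)).
have -> : k%:R^-1 * (e + \sum_(i0 < m) fine (\int[F (t.+1 + i0)%N]_x (Num.max (x - T) 0)%:E)) = e / k%:R + G.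
  by rewrite mulrDr mulrC.
rewrite /M; have [hTG|hTG] := leP T G.
  rewrite ge_min; apply/orP; left; rewrite lerDl.
  by rewrite mulr_ge0 // invr_ge0 ler0n.
rewrite ge_min; apply/orP; right.
by rewrite addrC lexx.
Qed.

Unset Implicit Arguments. Set Strict Implicit.

Lemma fine_le_helper (R : realType) (x y : \bar R) :
  (x <= y)%E -> (0 <= y)%E -> ((fine x)%:E <= y)%E.
Proof.
by case: x => [r| |] //= xy y0.
Qed.

Lemma key_ineq (R : realType) (k n : nat) (F : nat -> probability R R)
    (F_nonneg : forall t, (t < n)%N -> F t [set x : R | x < 0] = 0%E)
    (F_mean : forall t, (t < n)%N -> (F t).-integrable setT (fun x : R => x%:E))
    (l : nat) (hl1 : (1 <= l)%N) (hln : (l <= n)%N) (T : R) :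
  \sum_(1 <= j < l.+1) E_y n F j <=
  l%:R * T + \sum_(t <- iota 0 n) fine (\int[F t]_x (Num.max (x - T) 0)%:E).
Proof.
set Fs := [seq F t | t <- iota 0 n].
have szFs : size Fs = n by rewrite size_map size_iota.
have iphi : forall t, (t < n)%N -> (F t).-integrable setT (EFin \o phi T).
  move=> t tn; apply: integrable_bound => //; first exact: F_mean.
    exact: measurable_phi.
  move=> x; rewrite ger0_norm ?phi_ge0 // /phi ge_max addr_ge0 ?normr_ge0 // andbT.
  apply: (@lerD _ _ `|x| _ `|T|); last by rewrite -normrN ler_norm.
  by rewrite ge_max ler_norm normr_ge0.
have ipp : forall t, (t < n)%N ->
    (F t).-integrable setT (EFin \o (fun x => Num.max (x - T) 0)).
  move=> t tn; apply: integrable_bound => //; first exact: F_mean.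
    exact: measurable_pospart.
  move=> x; rewrite ger0_norm ?le_max ?lexx ?orbT // ge_max addr_ge0 ?normr_ge0 // andbT.
  by apply: (@lerD _ _ `|x| _ `|T|); [exact: ler_norm | rewrite -normrN ler_norm].
apply: (@le_trans _ _ (l%:R * T + \sum_(t <- iota 0 n) fine (\int[F t]_x (phi T x)%:E))).
  rewrite -lee_fin -sumEFin.
  apply: (@le_trans _ _ (\sum_(1 <= j < l.+1)
            iter_expect Fs (fun vs => (Num.max (jth_largest j vs) 0)%:E))%E).
    apply: lee_sum => j _; apply: fine_le_helper.
      by apply: iter_le => s _; rewrite lee_fin le_max lexx.
    by apply: iter_ge0 => s _; rewrite lee_fin le_max lexx orbT.
  apply: le_trans; first apply: iter_sum_superadd.
    by move=> j s _; rewrite lee_fin le_max lexx orbT.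
  have <- := @iter_linear R F (phi T) n 0 (l%:R * T).
    apply: iter_le => s hs; rewrite sumEFin lee_fin.
    by apply: orderstat_bound; rewrite hs szFs.
  by move=> t /andP[_ ht]; apply: iphi.
rewrite lerD2l big_seq [X in _ <= X]big_seq; apply: ler_sum => t; rewrite mem_iota add0n => /= tn.
apply: fine_le; [exact: integrable_fin_num (iphi t tn)|
                 exact: integrable_fin_num (ipp t tn)|].
apply: ae_ge0_le_integral => //.
- by move=> x _; rewrite lee_fin phi_ge0.
- by apply/measurable_realfun.measurable_EFinP; exact: measurable_phi.
- by move=> x _; rewrite lee_fin le_max lexx orbT.
- by apply/measurable_realfun.measurable_EFinP; exact: measurable_pospart.
exists [set x : R | x < 0]; split.
- have -> : [set x : R | x < 0] = [set` `]-oo, 0[%R] :> set R.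
    by apply/seteqP; split => x /=; rewrite in_itv.
  exact: measurable_itv.
- exact: F_nonneg.
- move=> x /= hx; rewrite ltNge; apply/negP => x0; apply: hx => _.
  by rewrite /phi (max_l x0).
Qed.


Theorem theorem1 (R : realType) (k n : nat) (F : nat -> probability R R)
    (F_nonneg : forall t, (t < n)%N -> F t [set x : R | x < 0] = 0%E)
    (F_mean : forall t, (t < n)%N -> (F t).-integrable setT (fun x : R => x%:E))
    (i : 'I_k) (S : 'I_k -> strategy R k)
    (S_valid : forall j, j != i -> valid_strategy (S j))
    (l : nat) (hl1 : (1 <= l)%N) (hln : (l <= n)%N) :
  ((T_ell k n F l)%:E <=
     utility n F (fun j => if j == i then thr_strategy (T_ell k n F l) else S j) i)%E.
Proof.
have k0 : (0 < k)%N by apply: leq_ltn_trans (leq0n i) (ltn_ord i).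
set T := T_ell k n F l.
set S' := fun j => if j == i then thr_strategy T else S j.
have hS : forall j t A v, 0 <= S' j t A v <= 1.
  move=> j t A v; rewrite /S'; case: eqP => [_|/eqP ji].
    by rewrite /thr_strategy; case: ifP => _; rewrite ?lexx ?ler01.
  exact: ((S_valid j ji t A).2 v).
have hSi : forall t A v, S' i t A v = if T <= v then 1 else 0.
  by move=> t A v; rewrite /S' eqxx.
have hint : forall t, (t < n)%N ->
    (F t).-integrable setT (EFin \o (fun x => Num.max (x - T) 0)).
  move=> t tn; apply: integrable_bound => //; first exact: F_mean.
    exact: measurable_pospart.
  move=> x; rewrite ger0_norm ?le_max ?lexx ?orbT // ge_max addr_ge0 ?normr_ge0 // andbT.
  by apply: (@lerD _ _ `|x| _ `|T|); [exact: ler_norm | rewrite -normrN ler_norm].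
have := @game_ind R k n F T i S' hS hSi hint n 0 _ (finset.in_setT i) (leqnn n).
set E := \sum_(u < n) _.
have hT : T <= k%:R^-1 * E.
  have key := @key_ineq R k n F F_nonneg F_mean l hl1 hln T.
  have -> : E = \sum_(t <- iota 0 n) fine (\int[F t]_x (Num.max (x - T) 0)%:E).
    rewrite /E; under eq_bigr do rewrite add0n.
    by rewrite -(big_mkord xpredT (fun t => fine (\int[F t]_x (Num.max (x - T) 0)%:E))) /index_iota subn0.
  set SE := \sum_(1 <= j < l.+1) E_y n F j in key.
  set E' := \sum_(t <- iota 0 n) _ in key *.
  have h2 : (k + l)%:R * T = SE.
    by rewrite /T /T_ell mulrA mulfV ?mul1r // pnatr_eq0 addn_eq0 negb_and -lt0n k0.
  rewrite -(@ler_pM2l _ k%:R); last by rewrite ltr0n.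
  rewrite [X in _ <= X]mulrA mulfV ?mul1r; last by rewrite pnatr_eq0 -lt0n.
  rewrite natrD mulrDl in h2.
  lra.
by rewrite (min_l hT).
Qed.
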